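(* Let $\operatorname{P}\in\operatorname{MM}(A,\theta,S)$ and suppose $\theta_i$ is varied to $\tilde\theta_i\in(0,1)$, where $i\in S_j$. Then: (i) for a generic $\tilde\theta_i$-covariation scheme $\sigma$ with image parameter $\tilde\theta$, $$\mathcal{D}_{\operatorname{CD}}(\sigma(\operatorname{P}),\operatorname{P})=\log\max_{y\in\mathbb{Y}_{S_j}^{\neq}}\prod_{l\in S_j}\Big(\frac{\tilde\theta_l}{\theta_l}\Big)^{A_{y,l}}-\log\min_{y\in\mathbb{Y}_{S_j}^{\neq}}\prod_{l\in S_j}\Big(\frac{\tilde\theta_l}{\theta_l}\Big)^{A_{y,l}};$$ (ii) for proportional covariation, $$\mathcal{D}_{\operatorname{CD}}(\sigma_{\operatorname{pro}}(\operatorname{P}),\operatorname{P})=\log\max_{y\in\mathbb{Y}_{S_j}^{\neq}}\Big(\frac{\tilde\theta_i}{\theta_i}\Big)^{A_{y,i}}\Big(\frac{1-\tilde\theta_i}{1-\theta_i}\Big)^{|A_{y,S_j^{-i}}|}-\log\min_{y\in\mathbb{Y}_{S_j}^{\neq}}\Big(\frac{\tilde\theta_i}{\theta_i}\Big)^{A_{y,i}}\Big(\frac{1-\tilde\theta_i}{1-\theta_i}\Big)^{|A_{y,S_j^{-i}}|};$$ (iii) for uniform covariation, $$\mathcal{D}_{\operatorname{CD}}(\sigma_{\operatorname{uni}}(\operatorname{P}),\operatorname{P})=\log\max_{y\in\mathbb{Y}_{S_j}^{\neq}}\frac{\tilde\theta_i^{A_{y,i}}\big(\frac{1-\tilde\theta_i}{\#S_j-1}\big)^{|A_{y,S_j^{-i}}|}}{\prod_{l\in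 S_j}\theta_l^{A_{y,l}}}-\log\min_{y\in\mathbb{Y}_{S_j}^{\neq}}\frac{\tilde\theta_i^{A_{y,i}}\big(\frac{1-\tilde\theta_i}{\#S_j-1}\big)^{|A_{y,S_j^{-i}}|}}{\prod_{l\in S_j}\theta_l^{A_{y,l}}};$$ (iv) for linear covariation with coefficients $\gamma_k,\delta_k$, $$\mathcal{D}_{\operatorname{CD}}(\sigma_{\operatorname{lin}}(\operatorname{P}),\operatorname{P})=\log\max_{y\in\mathbb{Y}_{S_j}^{\neq}}\Big(\frac{\tilde\theta_i}{\theta_i}\Big)^{A_{y,i}}\prod_{k\in S_j^{-i}}\Big(\frac{\gamma_k\tilde\theta_i+\delta_k}{\theta_k}\Big)^{A_{y,k}}-\log\min_{y\in\mathbb{Y}_{S_j}^{\neq}}\Big(\frac{\tilde\theta_i}{\theta_i}\Big)^{A_{y,i}}\prod_{k\in S_j^{-i}}\Big(\frac{\gamma_k\tilde\theta_i+\delta_k}{\theta_k}\Big)^{A_{y,k}}.$$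
   Context: Let $\mathbb{Y}$ be a finite set with $q$ elements. A monomial model $\operatorname{MM}(A,\theta,S)$ is given by $A\in\mathcal{M}_{q\times k}(\mathbb{Z}_{\ge0})$ with rows $A_y$, $y\in\mathbb{Y}$, parameters $\theta\in\mathbb{R}^k_{>0}$, and a partition $S=\{S_1,\dots,S_n\}$ of $[k]$ with each block $(\theta_l)_{l\in S_m}$ in the open probability simplex; $\operatorname{P}(y)=\prod_l\theta_l^{A_{y,l}}$, which is a probability distribution on $\mathbb{Y}$ for every such parameter. Notation: $S_j^{-i}=S_j\setminus\{i\}$, $|A_{y,H}|=\sum_{l\in H}A_{y,l}$; for $\emptyset\ne H\subset[k]$, $\mathbb{Y}_H^{=}=\{y\in\mathbb{Y}: A_{y,l}=0\text{ for all }l\in H\}$ and $\mathbb{Y}_H^{\neq}=\mathbb{Y}\setminus\mathbb{Y}_H^{=}$. A $\tilde\theta_i$-covariation scheme $\sigma$ ($i\in S_j$) maps $\theta$ to $\tilde\theta$ with $\tilde\theta_i$ given, $\tilde\theta_l=\theta_l$ for $l\notin S_j$, and $(\tilde\theta_l)_{l\in S_j}$ in the open simplex; $\sigma(\operatorname{P})(y)=\tilde\theta^{A_y}$. Proportional: $\tilde\theta_k=\frac{1-\tilde\theta_i}{1-\theta_i}\theta_k$; uniform: $\tilde\theta_k=\frac{1-\tilde\theta_i}{\#S_j-1}$; linear: $\tilde\theta_k=\gamma_k\tilde\theta_i+\delta_k$, constants chosen so the block sums to one ($k\in S_j^{-i}$). The CD distance between distributions $\tilde{\operatorname{P}},\operatorname{P}$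 on $\mathbb{Y}$ is $\mathcal{D}_{\operatorname{CD}}(\tilde{\operatorname{P}},\operatorname{P})=\log\max_{y}\frac{\tilde{\operatorname{P}}(y)}{\operatorname{P}(y)}-\log\min_y\frac{\tilde{\operatorname{P}}(y)}{\operatorname{P}(y)}$. *)

(* Defs.v *)
From HB Require Import structures.
From mathcomp Require Import all_boot all_order all_algebra.
From mathcomp Require Import reals exp.
Set Implicit Arguments. Unset Strict Implicit. Unset Printing Implicit Defensive.
Import Order.TTheory GRing.Theory Num.Theory.
Local Open Scope ring_scope.

Section MonomialModels.
Variable R : realType.

(* maximum / minimum of f over a finite set Y (0 by convention if Y empty) *)
Definition setmax (T : finType) (Y : {set T}) (f : T -> R) : R :=
  if [pick y in Y] is Some y0 then \big[Num.max/f y0]_(y in Y) f y else 0.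
Definition setmin (T : finType) (Y : {set T}) (f : T -> R) : R :=
  if [pick y in Y] is Some y0 then \big[Num.min/f y0]_(y in Y) f y else 0.

Definition CD_dist (Y : finType) (Pt P : Y -> R) : R :=
  ln (setmax [set: Y] (fun y => Pt y / P y)) -
  ln (setmin [set: Y] (fun y => Pt y / P y)).

(* Partition S = {S_1,...,S_n} of [k] encoded by a block map blk : 'I_k -> 'I_n,
   S_m = [set l | blk l == m]. *)
Definition block (k n : nat) (blk : 'I_k -> 'I_n) (m : 'I_n) : {set 'I_k} :=
  [set l | blk l == m].

Definition is_partition (k n : nat) (blk : 'I_k -> 'I_n) : Prop :=
  forall m : 'I_n, exists l : 'I_k, blk l = m.

Definition valid_param (k n : nat) (blk : 'I_k -> 'I_n) (th : 'I_k -> R) : Prop :=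
  (forall l, 0 < th l) /\ (forall m : 'I_n, \sum_(l in block blk m) th l = 1).

Definition mono_dist (Y : finType) (k : nat) (A : Y -> 'I_k -> nat)
  (th : 'I_k -> R) (y : Y) : R := \prod_(l < k) th l ^+ A y l.

Definition is_monomial_model (Y : finType) (k n : nat) (A : Y -> 'I_k -> nat)
  (blk : 'I_k -> 'I_n) : Prop :=
  is_partition blk /\
  forall th, valid_param blk th -> \sum_(y : Y) mono_dist A th y = 1.

Definition Yneq (Y : finType) (k : nat) (A : Y -> 'I_k -> nat) (H : {set 'I_k})
  : {set Y} := [set y | [exists l in H, A y l != 0%N]].

Definition cov_image (k n : nat) (blk : 'I_k -> 'I_n) (th tht : 'I_k -> R)
  (i : 'I_k) (tti : R) : Prop :=
  [/\ tht i = tti,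
      (forall l, blk l != blk i -> tht l = th l),
      (forall l, blk l == blk i -> 0 < tht l) &
      \sum_(l in block blk (blk i)) tht l = 1].

Definition th_pro (k n : nat) (blk : 'I_k -> 'I_n) (th : 'I_k -> R) (i : 'I_k)
  (tti : R) : 'I_k -> R :=
  fun l => if l == i then tti
           else if blk l == blk i then (1 - tti) / (1 - th i) * th l else th l.
Definition th_uni (k n : nat) (blk : 'I_k -> 'I_n) (th : 'I_k -> R) (i : 'I_k)
  (tti : R) : 'I_k -> R :=
  fun l => if l == i then tti
           else if blk l == blk i then (1 - tti) / (#|block blk (blk i)|.-1)%:R
           else th l.
Definition th_lin (k n : nat) (blk : 'I_k -> 'I_n) (th : 'I_k -> R) (i : 'I_k)
  (tti : R) (gam del : 'I_k -> R) : 'I_k -> R :=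
  fun l => if l == i then tti
           else if blk l == blk i then gam l * tti + del l else th l.

End MonomialModels.

(* Main.v *)
Require Import Defs.
From HB Require Import structures.
From mathcomp Require Import all_boot all_order all_algebra.
From mathcomp Require Import reals exp.
Import Order.TTheory GRing.Theory Num.Theory.
Local Open Scope ring_scope.

Section H.
Variable R : realType.

Lemma setmax_eq (T : finType) (Y : {set T}) (f : T -> R) m y0 :
  y0 \in Y -> f y0 = m -> (forall y, y \in Y -> f y <= m) -> setmax Y f = m.
Proof.
move=> Hy0 Hm Hle; rewrite /setmax; case: pickP => [y1 Hy1|H]; last by rewrite H in Hy0.
apply: le_anti; rewrite bigmax_le ?Hle //=.
by apply: (bigmax_sup y0) => //; rewrite Hm.
Qed.

Lemma setmin_eq (T : finType) (Y : {set T}) (f : T -> R) m y0 :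
  y0 \in Y -> f y0 = m -> (forall y, y \in Y -> m <= f y) -> setmin Y f = m.
Proof.
move=> Hy0 Hm Hle; rewrite /setmin; case: pickP => [y1 Hy1|H]; last by rewrite H in Hy0.
apply: le_anti; rewrite le_bigmin ?Hle ?andbT //=.
by apply: (bigmin_inf y0) => //; rewrite Hm.
Qed.

Lemma setmax_ext (T : finType) (Y : {set T}) (f g : T -> R) :
  {in Y, f =1 g} -> setmax Y f = setmax Y g.
Proof.
move=> H; rewrite /setmax; case: pickP => // y1 Hy1.
by rewrite H //; apply: eq_bigr => y Hy; rewrite H.
Qed.

Lemma setmin_ext (T : finType) (Y : {set T}) (f g : T -> R) :
  {in Y, f =1 g} -> setmin Y f = setmin Y g.
Proof.
move=> H; rewrite /setmin; case: pickP => // y1 Hy1.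
by rewrite H //; apply: eq_bigr => y Hy; rewrite H.
Qed.

Lemma setmax_const (T : finType) (Y : {set T}) (f : T -> R) c :
  (forall y, y \in Y -> f y = c) -> setmax Y f = setmin Y f.
Proof.
move=> H; rewrite /setmax /setmin; case: pickP => // y1 Hy1.
rewrite bigmax_eq_id ?bigmin_eq_id // => y Hy; by rewrite !H.
Qed.

Lemma cd_core (T : finType) (YS : {set T}) (P g : T -> R) :
  (forall y, 0 < P y) -> (forall y, y \notin YS -> g y = 1) ->
  \sum_y P y * g y = \sum_y P y ->
  ln (setmax [set: T] g) - ln (setmin [set: T] g)
  = ln (setmax YS g) - ln (setmin YS g).
Proof.
move=> HP Hg Hsum.
have key : forall y, y \in YS -> (forall z, z \in YS -> g z < 1) -> False.
  move=> y0 Hy0 Hlt.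
  have : \sum_y P y * (g y - 1) < 0.
    rewrite (bigID (fun y => y \in YS)) /=.
    rewrite [X in _ + X]big1 ?addr0; last by move=> y Hy; rewrite Hg // subrr mulr0.
    have := @ltr_sum R T (index_enum T) (fun y => y \in YS) (fun y => P y * (g y - 1)) (fun _ => 0).
    rewrite big1_eq; apply.
      by apply/hasP; exists y0 => //; rewrite mem_index_enum.
    by move=> y Hy; rewrite pmulr_rlt0 // subr_lt0 Hlt.
  under eq_bigr => y _ do rewrite mulrBr mulr1.
  by rewrite sumrB Hsum subrr ltxx.
have key' : forall y, y \in YS -> (forall z, z \in YS -> 1 < g z) -> False.
  move=> y0 Hy0 Hlt.
  have : 0 < \sum_y P y * (g y - 1).
    rewrite (bigID (fun y => y \in YS)) /=.
    rewrite [X in _ + X]big1 ?addr0; last by move=> y Hy; rewrite Hg // subrr mulr0.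
    have := @ltr_sum R T (index_enum T) (fun y => y \in YS) (fun _ => 0) (fun y => P y * (g y - 1)).
    rewrite big1_eq; apply.
      by apply/hasP; exists y0 => //; rewrite mem_index_enum.
    by move=> y Hy; rewrite pmulr_rgt0 // subr_gt0 Hlt.
  under eq_bigr => y _ do rewrite mulrBr mulr1.
  by rewrite sumrB Hsum subrr ltxx.
case: (set_0Vmem YS) => [H0|[y0 Hy0]].
  rewrite (@setmax_const T [set: T] g 1) ?(@setmax_const T YS g 1) ?subrr //.
    by move=> y; rewrite H0 in_set0.
  by move=> y _; apply: Hg; rewrite H0 in_set0.
have [ya Hya Hga] : exists2 ya, ya \in YS & 1 <= g ya.
  case: (boolP [exists y in YS, 1 <= g y]) => [/existsP[y /andP[]]|/existsPn Hn].
    by exists y.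
  exfalso; apply: (key y0 Hy0) => z Hz; have := Hn z; rewrite Hz /= -ltNge; done.
have [yb Hyb Hgb] : exists2 yb, yb \in YS & g yb <= 1.
  case: (boolP [exists y in YS, g y <= 1]) => [/existsP[y /andP[]]|/existsPn Hn].
    by exists y.
  exfalso; apply: (key' y0 Hy0) => z Hz; have := Hn z; rewrite Hz /= -ltNge; done.
case: (@arg_maxP _ R T y0 (mem YS) g Hy0) => y1 Hy1 Hmax.
case: (@arg_minP _ R T y0 (mem YS) g Hy0) => y2 Hy2 Hmin.
rewrite (@setmax_eq T [set: T] g (g y1) y1) ?in_setT //; last first.
  move=> y _; case: (boolP (y \in YS)) => Hy; first exact: Hmax.
  by rewrite (Hg y) // (le_trans Hga) //; exact: Hmax.
rewrite (@setmax_eq T YS g (g y1) y1) //.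
rewrite (@setmin_eq T [set: T] g (g y2) y2) ?in_setT //; last first.
  move=> y _; case: (boolP (y \in YS)) => Hy; first exact: Hmin.
  rewrite (Hg y) //; apply: (le_trans _ Hgb); exact: Hmin.
by rewrite (@setmin_eq T YS g (g y2) y2).
Qed.
End H.

Theorem theorem2 (R : realType) (Y : finType) (k n : nat)
  (A : Y -> 'I_k -> nat) (blk : 'I_k -> 'I_n) (th : 'I_k -> R)
  (i : 'I_k) (j : 'I_n) (tti : R) :
  is_monomial_model R A blk -> valid_param blk th ->
  blk i = j -> 0 < tti < 1 ->
  let Sj := block blk j in
  let Sji := Sj :\ i in
  let P := mono_dist A th in
  let YS := Yneq A Sj in
  (* (i) generic covariation scheme *)
  (forall tht : 'I_k -> R, cov_image blk th tht i tti ->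
     let f := fun y => \prod_(l in Sj) (tht l / th l) ^+ A y l in
     CD_dist (mono_dist A tht) P = ln (setmax YS f) - ln (setmin YS f)) /\
  (* (ii) proportional covariation *)
  (cov_image blk th (th_pro blk th i tti) i tti ->
     let f := fun y => (tti / th i) ^+ A y i *
                       ((1 - tti) / (1 - th i)) ^+ (\sum_(l in Sji) A y l)%N in
     CD_dist (mono_dist A (th_pro blk th i tti)) P
       = ln (setmax YS f) - ln (setmin YS f)) /\
  (* (iii) uniform covariation *)
  (cov_image blk th (th_uni blk th i tti) i tti ->
     let f := fun y => tti ^+ A y i *
                       ((1 - tti) / (#|Sj|.-1)%:R) ^+ (\sum_(l in Sji) A y l)%N
                       / \prod_(l in Sj) th l ^+ A y l in
     CD_dist (mono_dist A (th_uni blk th i tti)) P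
       = ln (setmax YS f) - ln (setmin YS f)) /\
  (* (iv) linear covariation *)
  (forall gam del : 'I_k -> R,
     cov_image blk th (th_lin blk th i tti gam del) i tti ->
     let f := fun y => (tti / th i) ^+ A y i *
                       \prod_(l in Sji) ((gam l * tti + del l) / th l) ^+ A y l in
     CD_dist (mono_dist A (th_lin blk th i tti gam del)) P
       = ln (setmax YS f) - ln (setmin YS f)).
Proof.
move=> [Hpart Hmm] [Hpos Hsum1] Hij /andP[t0 t1] Sj Sji P YS.
have HiSj : i \in Sj by rewrite /Sj /block inE Hij.
have inSj : forall l, (l \in Sj) = (blk l == blk i) by move=> l; rewrite /Sj /block inE Hij.
have gen : forall tht : 'I_k -> R, cov_image blk th tht i tti ->
     CD_dist (mono_dist A tht) P =
     ln (setmax YS (fun y => \prod_(l in Sj) (tht l / th l) ^+ A y l))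
     - ln (setmin YS (fun y => \prod_(l in Sj) (tht l / th l) ^+ A y l)).
  move=> tht [Hti Hout Hin Hsumt].
  set f := (fun y => \prod_(l in Sj) (tht l / th l) ^+ A y l).
  have thtpos : forall l, 0 < tht l.
    move=> l; case: (eqVneq (blk l) (blk i)) => H; first by apply: Hin; rewrite H.
    by rewrite Hout ?H.
  have valid : valid_param blk tht.
    split=> // m; case: (eqVneq m (blk i)) => [->//|Hm].
    rewrite -(Hsum1 m); apply: eq_bigr => l; rewrite /block inE => /eqP Hl.
    by apply: Hout; rewrite Hl.
  have Ppos : forall y, 0 < P y.
    move=> y; rewrite /P /mono_dist; apply: prodr_gt0 => l _; exact: exprn_gt0.
  have Hratio : forall y, mono_dist A tht y / P y = f y.
    move=> y; rewrite /P /mono_dist /f -prodf_div.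
    under eq_bigr do rewrite -expr_div_n.
    rewrite (bigID (fun l => l \in Sj)) /= [X in _ * X]big1 ?mulr1 //.
    move=> l Hl; have Hb : blk l != blk i by rewrite -inSj.
    by rewrite (Hout l Hb) divff ?expr1n // gt_eqF.
  rewrite /CD_dist (@setmax_ext R Y _ _ f) ?(@setmin_ext R Y _ _ f); try by move=> y _; exact: Hratio.
  apply: (@cd_core R Y YS P) => //.
    move=> y Hy; rewrite /f big1 // => l Hl.
    move: Hy; rewrite /YS /Yneq inE => /existsPn /(_ l); rewrite Hl /= negbK => /eqP ->.
    by rewrite expr0.
  under eq_bigr => y _ do rewrite -Hratio mulrC divfK ?gt_eqF //.
  by rewrite (Hmm _ valid) (Hmm _ (conj Hpos Hsum1)).
split; first by move=> tht H; exact: gen.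
split.
  move=> H f; rewrite (gen _ H) /f; congr (ln _ - ln _).
    apply: setmax_ext => y _.
    rewrite (bigD1 i) //= /th_pro eqxx; congr (_ * _).
    rewrite -prodrXr; apply: eq_big => l; first by rewrite /Sji in_setD1 andbC.
    move=> /andP[Hl Hli]; rewrite (negbTE Hli) -inSj Hl mulfK // gt_eqF // Hpos.
  apply: setmin_ext => y _.
  rewrite (bigD1 i) //= /th_pro eqxx; congr (_ * _).
  rewrite -prodrXr; apply: eq_big => l; first by rewrite /Sji in_setD1 andbC.
  move=> /andP[Hl Hli]; rewrite (negbTE Hli) -inSj Hl mulfK // gt_eqF // Hpos.
split.
  move=> H f; rewrite (gen _ H) /f; congr (ln _ - ln _).
    apply: setmax_ext => y _.
    under eq_bigr do rewrite expr_div_n.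
    rewrite prodf_div; congr (_ / _).
    rewrite (bigD1 i) //= /th_uni eqxx; congr (_ * _).
    rewrite -prodrXr; apply: eq_big => l; first by rewrite /Sji in_setD1 andbC.
    move=> /andP[Hl Hli]; by rewrite (negbTE Hli) -inSj Hl Hij /Sj.
  apply: setmin_ext => y _.
  under eq_bigr do rewrite expr_div_n.
  rewrite prodf_div; congr (_ / _).
  rewrite (bigD1 i) //= /th_uni eqxx; congr (_ * _).
  rewrite -prodrXr; apply: eq_big => l; first by rewrite /Sji in_setD1 andbC.
  move=> /andP[Hl Hli]; by rewrite (negbTE Hli) -inSj Hl Hij /Sj.
move=> gam del H f; rewrite (gen _ H) /f; congr (ln _ - ln _).
  apply: setmax_ext => y _.
  rewrite (bigD1 i) //= /th_lin eqxx; congr (_ * _).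
  apply: eq_big => l; first by rewrite /Sji in_setD1 andbC.
  by move=> /andP[Hl Hli]; rewrite (negbTE Hli) -inSj Hl.
apply: setmin_ext => y _.
rewrite (bigD1 i) //= /th_lin eqxx; congr (_ * _).
apply: eq_big => l; first by rewrite /Sji in_setD1 andbC.
by move=> /andP[Hl Hli]; rewrite (negbTE Hli) -inSj Hl.
Qed.
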